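(* In the setting below, $\tilde p_2\,p^s\,\pi=0$ on $\operatorname{Char}P$.
   Context: $\rho,p:\mathbb R^3\to\mathbb R$, $H:\mathbb R^3\to\mathbb R^3$ are smooth, time-independent, $\rho>0$, $\gamma$ constant, with the stationary equilibrium relation $\nabla p+H\times\operatorname{curl}H=0$; $c^2=\gamma p/\rho>0$, $0<|H|^2\ne\rho c^2$, and only points with $\xi\cdot H\neq0$, $\xi\times H\ne0$ are considered. $P$ is the $3\times3$ operator on $\mathbb R_t\times\mathbb R^3_x$: $P\beta=-\rho\partial_t^2\beta+\gamma\nabla(p\operatorname{div}\beta)+\nabla(\beta\cdot\nabla p)+(\nabla\times(\nabla\times(\beta\times H)))\times H+(\nabla\times H)\times(\nabla\times(\beta\times H))$. Its full symbol (convention $\partial\mapsto i\xi$, i.e. $P(e^{i(t\tau+x\cdot\xi)}v)=e^{i(t\tau+x\cdot\xi)}(p_2+p_1+p_0)v$) is $p_2+p_1+p_0$, $p_j$ homogeneous of degree $j$ in $(\tau,\xi)$, with $p_2=(\rho\tau^2-(H\cdot\xi)^2)\operatorname{Id}_3-(\gamma p+|H|^2)\xi\otimes\xi+(H\cdot\xi)(\xi\otimes H+H\otimes\xi)$. The subprincipal symbol is $p^s=p_1-\frac1{2i}\sum_j\partial_{x_j}\partial_{\xi_j}p_2$. Let $q_1=\rho\tau^2-(H\cdot\xi)^2$, $q_2=\rho(\tau^2-c_s^2)$, $q_3=\rho(\tau^2-c_f^2)$ with $c_{f,s}^2(x,\xi)=\tfrac12\big((c^2+h^2)|\xi|^2\pm\sqrt{(c^2-h^2)^2|\xi|^4+4b^2c^2|\xi|^2}\big)$,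 $h^2=|H|^2/\rho$, $b^2=|\xi\times H|^2/\rho$; $\operatorname{Char}P=\{q_1=0\}\cup\{q_2=0\}\cup\{q_3=0\}$. Let $w^2=|H|^2\xi\otimes\xi+|\xi|^2H\otimes H-(H\cdot\xi)(H\otimes\xi+\xi\otimes H)$, $\pi_1=\operatorname{Id}_3+\frac{w^2}{(H\cdot\xi)^2-|H|^2|\xi|^2}$, $\pi_2=\frac{1}{\rho c_s^2-\rho c_f^2}\Big((\gamma p+|H|^2)\xi\otimes\xi-(H\cdot\xi)(\xi\otimes H+H\otimes\xi)+\frac{(H\cdot\xi)^2w^2}{\rho c_s^2-(H\cdot\xi)^2}\Big)$, $\pi_3=\frac{1}{\rho c_f^2-\rho c_s^2}\Big((\gamma p+|H|^2)\xi\otimes\xi-(H\cdot\xi)(\xi\otimes H+H\otimes\xi)+\frac{(H\cdot\xi)^2w^2}{\rho c_f^2-(H\cdot\xi)^2}\Big)$. With $\Gamma_1,\Gamma_2,\Gamma_3$ pairwise disjoint conic neighborhoods of $\{q_1=0\},\{q_2=0\},\{q_3=0\}$, on $\Gamma_j$ set $\pi=\pi_j$ and $\tilde p_2=\pi_j+\sum_{k\ne j}\frac{q_j}{q_k}\pi_k$ (so $\tilde p_2p_2=q_j\operatorname{Id}_3$ there). *)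

(* Defs.v *)
From HB Require Import structures.
From mathcomp Require Import all_boot all_order all_algebra.
From mathcomp Require Import all_classical all_reals all_analysis.
From mathcomp Require Import complex.
Unset Printing Implicit Defensive.
Import Order.TTheory GRing.Theory Num.Theory.
Import numFieldNormedType.Exports.
Local Open Scope ring_scope.

Section MHD.
Context {R : realType}.

(** Points of R^3 and vectors are row vectors 'rV[R]_3; matrices 'M[R]_3
    act on column vectors. *)
Notation V3 := 'rV[R]_3.

Definition i0 : 'I_3 := @Ordinal 3 0 isT.
Definition i1 : 'I_3 := @Ordinal 3 1 isT.
Definition i2 : 'I_3 := @Ordinal 3 2 isT.

Definition ebas (j : 'I_3) : V3 := delta_mx 0 j.

Definition cmp (u : V3) (i : 'I_3) : R := u 0 i.

Definition dot (u v : V3) : R := \sum_i cmp u i * cmp v i.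
Definition sqn (u : V3) : R := dot u u.

Definition cross (u v : V3) : V3 :=
  \row_k (if k == i0 then cmp u i1 * cmp v i2 - cmp u i2 * cmp v i1
          else if k == i1 then cmp u i2 * cmp v i0 - cmp u i0 * cmp v i2
          else cmp u i0 * cmp v i1 - cmp u i1 * cmp v i0).

Definition outer (a b : V3) : 'M[R]_3 := a^T *m b.

Definition dpart (j : 'I_3) (f : V3 -> R) : V3 -> R :=
  fun x => derive f x (ebas j).

Definition iter_part (s : seq 'I_3) (f : V3 -> R) : V3 -> R :=
  foldr dpart f s.

Definition smooth (f : V3 -> R) : Prop :=
  forall (s : seq 'I_3) (x : V3), differentiable (iter_part s f) x.
Definition smoothV (F : V3 -> V3) : Prop :=
  forall i, smooth (fun x => cmp (F x) i).

Definition grad (f : V3 -> R) : V3 -> V3 := fun x => \row_j dpart j f x.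
Definition divg (F : V3 -> V3) : V3 -> R :=
  fun x => \sum_j dpart j (fun y => cmp (F y) j) x.
Definition curl (F : V3 -> V3) : V3 -> V3 := fun x =>
  let d j i := dpart j (fun y => cmp (F y) i) x in
  \row_k (if k == i0 then d i1 i2 - d i2 i1
          else if k == i1 then d i2 i0 - d i0 i2
          else d i0 i1 - d i1 i0).

Definition Pop (rho p : V3 -> R) (H : V3 -> V3) (gamma : R)
  (beta : R -> V3 -> V3) : R -> V3 -> V3 := fun t x =>
  - rho x *: derive1 (fun s => derive1 (fun r => beta r x) s) t
  + gamma *: grad (fun y => p y * divg (beta t) y) x
  + grad (fun y => dot (beta t y) (grad p y)) x
  + cross (curl (curl (fun y => cross (beta t y) (H y))) x) (H x)
  + cross (curl H x) (curl (fun y => cross (beta t y) (H y)) x).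

(** Coefficients of the first-order part of P = sum_alpha a_alpha d^alpha
    at (t0,x0): a_alpha(t0,x0) v = P((z - z0)^alpha v)(t0,x0) for |alpha| = 1.
    Column k of the matrix is P applied to the field (z-z0)_alpha e_k. *)
Definition coef_t rho p H gamma (t0 : R) (x0 : V3) : 'M[R]_3 :=
  \matrix_(i, k) cmp (Pop rho p H gamma
        (fun t _ => (t - t0) *: ebas k) t0 x0) i.
Definition coef_x rho p H gamma (j : 'I_3) (t0 : R) (x0 : V3) : 'M[R]_3 :=
  \matrix_(i, k) cmp (Pop rho p H gamma
        (fun _ x => (cmp x j - cmp x0 j) *: ebas k) t0 x0) i.

Definition cplx_mx (M : 'M[R]_3) : 'M[R[i]]_3 := map_mx (fun a => a%:C%C) M.

Definition p1 rho p H gamma (t : R) (x : V3) (tau : R) (xi : V3)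
  : 'M[R[i]]_3 :=
  'i%C *: cplx_mx (tau *: coef_t rho p H gamma t x
                 + \sum_j cmp xi j *: coef_x rho p H gamma j t x).

Definition p2 (rho p : V3 -> R) (H : V3 -> V3) (gamma : R)
  (x : V3) (tau : R) (xi : V3) : 'M[R]_3 :=
  (rho x * tau ^+ 2 - (dot (H x) xi) ^+ 2) *: 1%:M
  - (gamma * p x + sqn (H x)) *: outer xi xi
  + dot (H x) xi *: (outer xi (H x) + outer (H x) xi).

Definition d2p2 rho p H gamma (x : V3) (tau : R) (xi : V3) : 'M[R]_3 :=
  \matrix_(a, b) \sum_j
     dpart j (fun y => dpart j (fun z => p2 rho p H gamma y tau z a b) xi) x.

Definition psub rho p H gamma (t : R) (x : V3) (tau : R) (xi : V3)
  : 'M[R[i]]_3 :=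
  p1 rho p H gamma t x tau xi
  - (2%:R * 'i%C)^-1 *: cplx_mx (d2p2 rho p H gamma x tau xi).

Definition c2 (rho p : V3 -> R) (gamma : R) x := gamma * p x / rho x.
Definition h2 (rho : V3 -> R) (H : V3 -> V3) x := sqn (H x) / rho x.
Definition b2 (rho : V3 -> R) (H : V3 -> V3) x xi := sqn (cross xi (H x)) / rho x.
Definition disc rho p H gamma x xi :=
  Num.sqrt ((c2 rho p gamma x - h2 rho H x) ^+ 2 * sqn xi ^+ 2
            + 4%:R * b2 rho H x xi * c2 rho p gamma x * sqn xi).
Definition cf2 rho p H gamma x xi :=
  ((c2 rho p gamma x + h2 rho H x) * sqn xi + disc rho p H gamma x xi) / 2%:R.
Definition cs2 rho p H gamma x xi :=
  ((c2 rho p gamma x + h2 rho H x) * sqn xi - disc rho p H gamma x xi) / 2%:R.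

(** q_1, q_2, q_3, indexed by 'I_3 (index 0,1,2 stand for 1,2,3) *)
Definition qq rho p H gamma (j : 'I_3) x (tau : R) xi : R :=
  if j == i0 then rho x * tau ^+ 2 - (dot (H x) xi) ^+ 2
  else if j == i1 then rho x * (tau ^+ 2 - cs2 rho p H gamma x xi)
  else rho x * (tau ^+ 2 - cf2 rho p H gamma x xi).

Definition w2 (H : V3 -> V3) x xi : 'M[R]_3 :=
  sqn (H x) *: outer xi xi + sqn xi *: outer (H x) (H x)
  - dot (H x) xi *: (outer (H x) xi + outer xi (H x)).

Definition pi_aux rho p H gamma x xi (c : R) (c' : R) : 'M[R]_3 :=
  (rho x * c - rho x * c')^-1 *:
   ((gamma * p x + sqn (H x)) *: outer xi xi
    - dot (H x) xi *: (outer xi (H x) + outer (H x) xi)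
    + ((dot (H x) xi) ^+ 2 / (rho x * c - (dot (H x) xi) ^+ 2)) *: w2 H x xi).

Definition piproj rho p H gamma (j : 'I_3) x xi : 'M[R]_3 :=
  if j == i0 then
    1%:M + ((dot (H x) xi) ^+ 2 - sqn (H x) * sqn xi)^-1 *: w2 H x xi
  else if j == i1 then
    pi_aux rho p H gamma x xi (cs2 rho p H gamma x xi) (cf2 rho p H gamma x xi)
  else
    pi_aux rho p H gamma x xi (cf2 rho p H gamma x xi) (cs2 rho p H gamma x xi).

Definition tp2 rho p H gamma (j : 'I_3) x tau xi : 'M[R]_3 :=
  piproj rho p H gamma j x xi
  + \sum_(k | k != j) (qq rho p H gamma j x tau xi / qq rho p H gamma k x tau xi)
                        *: piproj rho p H gamma k x xi.

End MHD.

(* Main.v *)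
Require Import Defs.
From HB Require Import structures.
From mathcomp Require Import all_boot all_order all_algebra.
From mathcomp Require Import all_classical all_reals all_analysis.
From mathcomp Require Import complex.
From mathcomp Require Import ring lra.
Import Order.TTheory GRing.Theory Num.Theory.
Import numFieldNormedType.Exports.
Local Open Scope ring_scope.

Section Tk.
Context {R : realType}.
Notation V3 := 'rV[R]_3.
Implicit Types (f g : V3 -> R) (y : V3).

Lemma dfD f g y : differentiable f y -> differentiable g y ->
  differentiable (fun z => f z + g z) y.
Proof. move=> hf hg; exact: differentiableD. Qed.
Lemma dfM f g y : differentiable f y -> differentiable g y ->
  differentiable (fun z => f z * g z) y.
Proof. move=> hf hg; exact: differentiableM. Qed.
Lemma dfN f y : differentiable f y -> differentiable (fun z => - f z) y.
Proof. move=> hf; exact: differentiableN. Qed.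
Lemma dfB f g y : differentiable f y -> differentiable g y ->
  differentiable (fun z => f z - g z) y.
Proof. move=> hf hg; exact: differentiableB. Qed.
Lemma dfC (c : R) y : differentiable (fun _ : V3 => c) y.
Proof. exact: differentiable_cst. Qed.
Lemma dfX (j : 'I_3) y : differentiable (fun z : V3 => cmp z j) y.
Proof. exact: differentiable_coord. Qed.

Lemma dpD j f g y : differentiable f y -> differentiable g y ->
  dpart j (fun z => f z + g z) y = dpart j f y + dpart j g y.
Proof. move=> hf hg; rewrite /dpart; apply: deriveD; exact: diff_derivable. Qed.
Lemma dpB j f g y : differentiable f y -> differentiable g y ->
  dpart j (fun z => f z - g z) y = dpart j f y - dpart j g y.
Proof. move=> hf hg; rewrite /dpart; apply: deriveB; exact: diff_derivable. Qed.
Lemma dpN j f y : differentiable f y ->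
  dpart j (fun z => - f z) y = - dpart j f y.
Proof. move=> hf; rewrite /dpart; apply: deriveN; exact: diff_derivable. Qed.
Lemma dpM j f g y : differentiable f y -> differentiable g y ->
  dpart j (fun z => f z * g z) y = dpart j f y * g y + f y * dpart j g y.
Proof.
move=> hf hg; rewrite /dpart.
rewrite (@deriveM _ _ f g y (ebas j)); try exact: diff_derivable.
by rewrite /GRing.scale /= addrC mulrC [_ * derive g _ _]mulrC.
Qed.
Lemma dpC j (c : R) y : dpart j (fun _ : V3 => c) y = 0.
Proof. rewrite /dpart; exact: (derive_cst c). Qed.
Lemma dpX j l y : dpart j (fun z : V3 => cmp z l) y = (j == l)%:R.
Proof.
have @f : {linear V3 -> R}.
  by exists (fun N : V3 => N 0 l); do 2![eexists]; do ?[constructor];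
     rewrite ?mxE// => ? *; rewrite ?mxE//; move=> ?; rewrite !mxE.
rewrite /dpart /cmp (_ : (fun _ => _) = f) //.
rewrite deriveE; last exact/linear_differentiable/coord_continuous.
rewrite diff_lin; last exact: coord_continuous.
by rewrite /= /ebas mxE /= eq_sym.
Qed.
Lemma dpX2 j f y : differentiable f y ->
  dpart j (fun z => f z ^+ 2) y = 2%:R * f y * dpart j f y.
Proof.
move=> hf; rewrite (_ : (fun z => f z ^+ 2) = (fun z => f z * f z)); last first.
  by apply: funext => z; rewrite expr2.
rewrite dpM //; ring.
Qed.
Lemma dfX2 f y : differentiable f y -> differentiable (fun z => f z ^+ 2) y.
Proof.
move=> hf; rewrite (_ : (fun z => f z ^+ 2) = (fun z => f z * f z)); last first.
  by apply: funext => z; rewrite expr2.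
exact: dfM.
Qed.
Lemma sum3 (F : 'I_3 -> R) : \sum_i F i = F i0 + F i1 + F i2.
Proof.
rewrite !big_ord_recl big_ord0 addr0 addrA.
congr (F _ + F _ + F _); exact: val_inj.
Qed.
Lemma dpS j (F : 'I_3 -> V3 -> R) y :
  (forall i, differentiable (F i) y) ->
  dpart j (fun z => \sum_i F i z) y = \sum_i dpart j (F i) y.
Proof.
move=> hF; rewrite sum3 (_ : (fun z => \sum_i F i z) = (fun z => F i0 z + F i1 z + F i2 z)); last first.
  by apply: funext => z; rewrite sum3.
rewrite !dpD //; exact: dfD.
Qed.
Lemma dfS (F : 'I_3 -> V3 -> R) y :
  (forall i, differentiable (F i) y) ->
  differentiable (fun z => \sum_i F i z) y.
Proof.
move=> hF; rewrite (_ : (fun z => \sum_i F i z) = (fun z => F i0 z + F i1 z + F i2 z)); last first.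
  by apply: funext => z; rewrite sum3.
apply: dfD => //; exact: dfD.
Qed.
Lemma dp_ext j f g y : (forall z, f z = g z) -> dpart j f y = dpart j g y.
Proof. by move=> e; rewrite (_ : f = g) //; apply: funext. Qed.
Lemma ord3P (i : 'I_3) : [\/ i = i0, i = i1 | i = i2].
Proof.
case: i => [[|[|[|n]]] Hi].
- by apply: Or31; apply: val_inj.
- by apply: Or32; apply: val_inj.
- by apply: Or33; apply: val_inj.
- by [].
Qed.
End Tk.

Ltac dfauto := repeat match goal with
  | |- differentiable _ _ => first [ apply: dfC | apply: dfX | apply: dfD | apply: dfB | apply: dfM
                                  | apply: dfN | apply: dfX2 | apply: dfS ]
  | |- forall _, _ => intro
  end.


Section A.
Context {R : realType}.
Notation V3 := 'rV[R]_3.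
Variables (rho p : V3 -> R) (H : V3 -> V3) (gamma : R).
Implicit Types (u : V3).

Lemma d1_aff (t0 s : R) (e : V3) : derive1 (fun r => (r - t0) *: e) s = e.
Proof.
have hk : differentiable (fun r : R => r - t0) s.
  apply: differentiableB => //; exact: differentiable_cst.
rewrite derive1E deriveE; last exact: differentiableZl.
rewrite diffZl //= -deriveE // deriveB //.
by rewrite derive_id (derive_cst t0) subr0 scale1r.
Qed.

Lemma cross0l u : cross 0 u = 0 :> V3.
Proof. by apply/rowP => k; rewrite /cross /cmp !mxE; case: ifP => _; [|case: ifP => _]; rewrite !mul0r subrr. Qed.
Lemma cross0r u : cross u 0 = 0 :> V3.
Proof. by apply/rowP => k; rewrite /cross /cmp !mxE; case: ifP => _; [|case: ifP => _]; rewrite !mulr0 subrr. Qed.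
Lemma dot0l u : dot 0 u = 0.
Proof. by rewrite /dot big1 // => i _; rewrite /cmp mxE mul0r. Qed.
Lemma grad_cst (c : R) y : grad (fun _ : V3 => c) y = 0.
Proof. by apply/rowP => j; rewrite !mxE dpC. Qed.
Lemma divg_cst (c : V3) y : divg (fun _ : V3 => c) y = 0.
Proof. by rewrite /divg big1 // => i _; rewrite dpC. Qed.
Lemma curl_cst (c : V3) y : curl (fun _ : V3 => c) y = 0.
Proof. by apply/rowP => k; rewrite /curl !mxE !dpC subrr; case: ifP => _ //; case: ifP. Qed.

Lemma coef_t0 t0 x0 : coef_t rho p H gamma t0 x0 = 0.
Proof.
apply/matrixP => i k; rewrite !mxE /Pop /=.
rewrite subrr scale0r.
rewrite (_ : (fun s => _) = (fun _ => ebas k)); last by apply: funext => s; rewrite d1_aff.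
rewrite (derive1_cst (ebas k)) scaler0 add0r.
rewrite (_ : (fun y => p y * divg (fun=> 0) y) = fun _ => 0); last first.
  by apply: funext => y; rewrite divg_cst mulr0.
rewrite (_ : (fun y => dot 0 (grad p y)) = fun _ => 0); last first.
  by apply: funext => y; rewrite dot0l.
rewrite (_ : (fun y => cross 0 (H y)) = fun _ => 0); last first.
  by apply: funext => y; rewrite cross0l.
rewrite !grad_cst (_ : curl (fun _ => 0) = fun _ => 0); last first.
  by apply: funext => y; rewrite curl_cst.
rewrite curl_cst cross0l cross0r scaler0 !addr0.
by rewrite /cmp mxE.
Qed.
End A.

Section B.
Context {R : realType}.
Notation V3 := 'rV[R]_3.
Implicit Types (u v y : V3) (f : V3 -> R).

Definition nb1 (d : 'I_3) : 'I_3 := if d == i0 then i1 else if d == i1 then i2 else i0.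
Definition nb2 (d : 'I_3) : 'I_3 := if d == i0 then i2 else if d == i1 then i0 else i1.

Lemma crossE u v d : cmp (cross u v) d =
  cmp u (nb1 d) * cmp v (nb2 d) - cmp u (nb2 d) * cmp v (nb1 d).
Proof. by rewrite /cross /cmp mxE /nb1 /nb2; case: ifP => _ //; case: ifP. Qed.

Lemma curlE (F : V3 -> V3) y d : cmp (curl F y) d =
  dpart (nb1 d) (fun z => cmp (F z) (nb2 d)) y - dpart (nb2 d) (fun z => cmp (F z) (nb1 d)) y.
Proof. by rewrite /curl /cmp mxE /nb1 /nb2; case: ifP => _ //; case: ifP. Qed.

Lemma cmpZ c u l : cmp (c *: u) l = c * cmp u l.
Proof. by rewrite /cmp mxE. Qed.
Lemma cmpD u v l : cmp (u + v) l = cmp u l + cmp v l.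
Proof. by rewrite /cmp mxE. Qed.
Lemma cmp_ebas k l : cmp (ebas k : V3) l = (k == l)%:R.
Proof. by rewrite /cmp /ebas mxE eqxx eq_sym. Qed.
Lemma cmp_row (F : 'I_3 -> R) l : cmp (\row_n F n : V3) l = F l.
Proof. by rewrite /cmp mxE. Qed.
Lemma cmp_grad f y l : cmp (grad f y) l = dpart l f y.
Proof. by rewrite /cmp mxE. Qed.
Lemma crossZl c u v : cross (c *: u) v = c *: cross u v.
Proof. apply/rowP => d; change (cmp (cross (c *: u) v) d = cmp (c *: cross u v) d). rewrite cmpZ !crossE !cmpZ; ring. Qed.
Lemma dotZl c u v : dot (c *: u) v = c * dot u v.
Proof. rewrite /dot mulr_sumr; apply: eq_bigr => i _; rewrite cmpZ; ring. Qed.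
Lemma dot_ebas k v : dot (ebas k : V3) v = cmp v k.
Proof.
rewrite /dot (bigD1 k) //= cmp_ebas eqxx mul1r big1 ?addr0 // => i ik.
by rewrite cmp_ebas eq_sym (negbTE ik) mul0r.
Qed.

Variables (rho p : V3 -> R) (H : V3 -> V3) (gamma : R).
Hypotheses (sp : smooth p) (sH : smoothV H).
Lemma hdiff n y : differentiable (fun z => cmp (H z) n) y.
Proof. exact: (sH n [::] y). Qed.
Lemma hdiff1 a n y : differentiable (dpart a (fun z => cmp (H z) n)) y.
Proof. exact: (sH n [:: a] y). Qed.
Lemma pdiff y : differentiable p y.
Proof. exact: (sp [::] y). Qed.
Lemma pdiff1 a y : differentiable (dpart a p) y.
Proof. exact: (sp [:: a] y). Qed.

Ltac dfa := dfauto; try solve [apply: hdiff | apply: hdiff1 | apply: pdiff | apply: pdiff1 | auto].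

Lemma curl2E (F : V3 -> V3) y0 d
  (hF : forall a b, differentiable (fun y => dpart a (fun z => cmp (F z) b) y) y0) :
  cmp (curl (curl F) y0) d =
  (dpart (nb1 d) (fun y => dpart (nb1 (nb2 d)) (fun z => cmp (F z) (nb2 (nb2 d))) y) y0
   - dpart (nb1 d) (fun y => dpart (nb2 (nb2 d)) (fun z => cmp (F z) (nb1 (nb2 d))) y) y0)
  - (dpart (nb2 d) (fun y => dpart (nb1 (nb1 d)) (fun z => cmp (F z) (nb2 (nb1 d))) y) y0
   - dpart (nb2 d) (fun y => dpart (nb2 (nb1 d)) (fun z => cmp (F z) (nb1 (nb1 d))) y) y0).
Proof.
rewrite curlE (@dp_ext _ (nb1 d) _ _ y0 (fun z => curlE F z (nb2 d))).
rewrite (@dp_ext _ (nb2 d) _ _ y0 (fun z => curlE F z (nb1 d))).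
by rewrite !dpB.
Qed.

Variables (x : V3) (j k : 'I_3).

Lemma divgB y : divg (fun z => (cmp z j - cmp x j) *: ebas k) y = (j == k)%:R.
Proof.
rewrite /divg (eq_bigr (fun l => (l == j)%:R * (k == l)%:R)); last first.
  move=> l _; rewrite (@dp_ext _ l _ (fun z => (cmp z j - cmp x j) * (k == l)%:R)); last first.
    by move=> z; rewrite cmpZ cmp_ebas.
  rewrite dpM; try by dfa.
  by rewrite dpB ?dpX ?dpC ?subr0 ?mulr0 ?addr0 //; dfa.
rewrite (bigD1 j) //= eqxx mul1r big1 ?addr0 ?(eq_sym k) // => l lj.
by rewrite (negbTE lj) mul0r.
Qed.

Lemma G1 g a (hg : forall y, differentiable g y) :
  (fun y => dpart a (fun z => (cmp z j - cmp x j) * g z) y) =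
  fun y => (a == j)%:R * g y + (cmp y j - cmp x j) * dpart a g y.
Proof.
apply: funext => y; rewrite dpM; try by dfa.
by rewrite dpB ?dpX ?dpC ?subr0 //; dfa.
Qed.

Lemma G2 g a c (hg : forall y, differentiable g y)
  (hg1 : forall y, differentiable (dpart a g) y) :
  dpart c (fun y => dpart a (fun z => (cmp z j - cmp x j) * g z) y) x =
  (a == j)%:R * dpart c g x + (c == j)%:R * dpart a g x.
Proof.
rewrite G1 // dpD; try by dfa.
rewrite dpM; try by dfa.
rewrite dpM; try by dfa.
rewrite dpB ?dpX ?dpC ?subrr; try by dfa.
ring.
Qed.

Lemma G3 g a y0 (hg : forall y, differentiable g y)
  (hg1 : forall y, differentiable (dpart a g) y) :
  differentiable (fun y => dpart a (fun z => (cmp z j - cmp x j) * g z) y) y0.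
Proof. rewrite G1 //; dfa. Qed.

Definition gb b := fun z => (k == nb1 b)%:R * cmp (H z) (nb2 b) - (k == nb2 b)%:R * cmp (H z) (nb1 b).
Lemma gbE b : (fun z => cmp (cross (ebas k) (H z)) b) = gb b.
Proof. by apply: funext => z; rewrite crossE !cmp_ebas. Qed.
Lemma gb_d b y : differentiable (gb b) y.
Proof. rewrite /gb; dfa. Qed.
Lemma gb_dp a b y : dpart a (gb b) y = (k == nb1 b)%:R * dpart a (fun z => cmp (H z) (nb2 b)) y
   - (k == nb2 b)%:R * dpart a (fun z => cmp (H z) (nb1 b)) y.
Proof. by rewrite /gb dpB ?dpM ?dpC ?mul0r ?add0r //; dfa. Qed.
Lemma gb_d1 a b y : differentiable (dpart a (gb b)) y.
Proof.
rewrite (_ : dpart a (gb b) = fun y => (k == nb1 b)%:R * dpart a (fun z => cmp (H z) (nb2 b)) y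
   - (k == nb2 b)%:R * dpart a (fun z => cmp (H z) (nb1 b)) y); last first.
  by apply: funext => y'; rewrite gb_dp.
dfa.
Qed.

Lemma Gfun a b : (fun y => dpart a (fun z => cmp (cross ((cmp z j - cmp x j) *: ebas k) (H z)) b) y)
  = (fun y => dpart a (fun z => (cmp z j - cmp x j) * gb b z) y).
Proof.
apply: funext => y; apply: dp_ext => z.
by rewrite crossZl cmpZ -gbE.
Qed.

Lemma J1 a b : dpart a (fun z => cmp (cross ((cmp z j - cmp x j) *: ebas k) (H z)) b) x
  = (a == j)%:R * gb b x.
Proof.
have := congr1 (fun F => F x) (Gfun a b) => /= ->.
rewrite dpM; try by (try apply: gb_d); dfa.
by rewrite dpB ?dpX ?dpC ?subrr ?subr0 ?mul0r ?addr0 //; dfa.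
Qed.

Lemma JJ a b c : dpart c (fun y => dpart a (fun z => cmp (cross ((cmp z j - cmp x j) *: ebas k) (H z)) b) y) x
  = (a == j)%:R * dpart c (gb b) x + (c == j)%:R * dpart a (gb b) x.
Proof. by rewrite Gfun G2 //; [apply: gb_d | apply: gb_d1]. Qed.

Lemma J3 a b y0 : differentiable (fun y => dpart a (fun z => cmp (cross ((cmp z j - cmp x j) *: ebas k) (H z)) b) y) y0.
Proof. by rewrite Gfun; apply: G3; [apply: gb_d | apply: gb_d1]. Qed.

End B.

Section C.
Context {R : realType}.
Notation V3 := 'rV[R]_3.
Implicit Types (u v y : V3) (f : V3 -> R).
Variables (rho p : V3 -> R) (H : V3 -> V3) (gamma : R).
Hypotheses (sp : smooth p) (sH : smoothV H).
Ltac dfa := dfauto; try solve [apply: (hdiff _ sH) | apply: (hdiff1 _ sH) | apply: (pdiff _ sp) | apply: (pdiff1 _ sp) | auto].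
Variables (x : V3) (j k : 'I_3).
Definition dH c n := dpart c (fun z => cmp (H z) n) x.
Definition ckv b := (k == nb1 b)%:R * cmp (H x) (nb2 b) - (k == nb2 b)%:R * cmp (H x) (nb1 b).
Definition dk c b := (k == nb1 b)%:R * dH c (nb2 b) - (k == nb2 b)%:R * dH c (nb1 b).
Definition J1v a b := (a == j)%:R * ckv b.
Definition JJv c a b := (a == j)%:R * dk c b + (c == j)%:R * dk a b.
Definition curlGv d := J1v (nb1 d) (nb2 d) - J1v (nb2 d) (nb1 d).
Definition ccGv d := (JJv (nb1 d) (nb1 (nb2 d)) (nb2 (nb2 d)) - JJv (nb1 d) (nb2 (nb2 d)) (nb1 (nb2 d)))
  - (JJv (nb2 d) (nb1 (nb1 d)) (nb2 (nb1 d)) - JJv (nb2 d) (nb2 (nb1 d)) (nb1 (nb1 d))).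
Definition curlHv d := dH (nb1 d) (nb2 d) - dH (nb2 d) (nb1 d).
Definition CXe i := gamma * (dpart i p x * (j == k)%:R) + (i == j)%:R * dpart k p x
  + (ccGv (nb1 i) * cmp (H x) (nb2 i) - ccGv (nb2 i) * cmp (H x) (nb1 i))
  + (curlHv (nb1 i) * curlGv (nb2 i) - curlHv (nb2 i) * curlGv (nb1 i)).


Let G := (fun y => cross ((cmp y j - cmp x j) *: ebas k) (H y)).
Lemma L_cH d : cmp (curl H x) d = curlHv d.
Proof. by rewrite curlE. Qed.
Lemma L_cG d : cmp (curl G x) d = curlGv d.
Proof. rewrite curlE /G !(J1 _ sH) /curlGv /J1v /ckv /gb //. Qed.
Lemma L_cc d : cmp (curl (curl G) x) d = ccGv d.
Proof.
rewrite curl2E; last by move=> a b; apply: (J3 _ sH).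
rewrite /G !(JJ _ sH) !(gb_dp _ sH) /ccGv /JJv /dk /dH //.
Qed.

Lemma coef_xE t i : coef_x rho p H gamma j t x i k = CXe i.
Proof.
rewrite /coef_x mxE /Pop /= subrr scale0r.
rewrite (_ : (fun s : R => derive1 (fun _ : R => (0:V3)) s) = (fun _ => 0)); last first.
  apply: funext => s; exact: (derive1_cst (0 : V3)).
rewrite (derive1_cst (0 : V3)) scaler0 add0r.
rewrite !cmpD cmpZ !cmp_grad !crossE.
rewrite (@dp_ext _ i (fun y => p y * divg _ y) (fun y => p y * (j == k)%:R)); last first.
  by move=> y; rewrite divgB.
rewrite dpM ?dpC ?mulr0 ?addr0; try by dfa.
rewrite (@dp_ext _ i (fun y => dot _ (grad p y)) (fun y => (cmp y j - cmp x j) * dpart k p y)); last first.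
  by move=> y; rewrite dotZl dot_ebas cmp_grad.
rewrite dpM; try by dfa.
rewrite dpB ?dpX ?dpC ?subrr ?subr0 ?mul0r ?addr0; try by dfa.
rewrite -/G !L_cc !L_cG !L_cH /CXe (eq_sym i j).
done.
Qed.
End C.

Section D.
Context {R : realType}.
Notation V3 := 'rV[R]_3.
Implicit Types (u v y : V3) (f : V3 -> R).

Lemma dot3 u v : dot u v = cmp u i0 * cmp v i0 + cmp u i1 * cmp v i1 + cmp u i2 * cmp v i2.
Proof. by rewrite /dot sum3. Qed.
Lemma outerE u v a b : outer u v a b = cmp u a * cmp v b.
Proof. by rewrite /outer mxE big_ord1 !mxE. Qed.

Lemma dp_dot_z jj u y : dpart jj (fun z => dot u z) y = cmp u jj.
Proof.
rewrite /dot dpS; last by move=> i; dfauto.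
rewrite (eq_bigr (fun i => cmp u i * (jj == i)%:R)); last first.
  by move=> i _; rewrite dpM ?dpC ?dpX ?mul0r ?add0r //; dfauto.
rewrite (bigD1 jj) //= eqxx mulr1 big1 ?addr0 // => i ij.
by rewrite eq_sym (negbTE ij) mulr0.
Qed.
Lemma df_dot_z u y : differentiable (fun z => dot u z) y.
Proof. rewrite /dot; dfauto. Qed.

Variables (rho p : V3 -> R) (H : V3 -> V3) (gamma : R).
Hypotheses (sp : smooth p) (sH : smoothV H).

Lemma df_dot_H v y : differentiable (fun z => dot (H z) v) y.
Proof. rewrite /dot; dfauto; exact: hdiff. Qed.
Lemma df_sqn_H y : differentiable (fun z => sqn (H z)) y.
Proof. rewrite /sqn /dot; dfauto; exact: hdiff. Qed.
Lemma dp_dot_H jj v y : dpart jj (fun z => dot (H z) v) y =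
  \sum_n dpart jj (fun z => cmp (H z) n) y * cmp v n.
Proof.
rewrite /dot dpS; last by move=> i; dfauto; exact: hdiff.
apply: eq_bigr => i _; rewrite dpM ?dpC ?mulr0 ?addr0 //; dfauto; exact: hdiff.
Qed.
Lemma dp_sqn_H jj y : dpart jj (fun z => sqn (H z)) y =
  \sum_n 2%:R * cmp (H y) n * dpart jj (fun z => cmp (H z) n) y.
Proof.
rewrite /sqn /dot dpS; last by move=> i; dfauto; exact: hdiff.
apply: eq_bigr => i _; rewrite dpM; try (dfauto; exact: hdiff).
ring.
Qed.

Ltac dfa := dfauto; try solve [apply: (hdiff _ sH) | apply: (hdiff1 _ sH) | apply: (pdiff _ sp)
   | apply: (pdiff1 _ sp) | apply: df_dot_z | apply: df_dot_H | apply: df_sqn_H | auto].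

Ltac dps := repeat first [ rewrite dpD; [idtac | by dfa ..] | rewrite dpB; [idtac | by dfa ..]
  | rewrite dpM; [idtac | by dfa ..] | rewrite dpN; [idtac | by dfa ..] | rewrite dpX2; [idtac | by dfa ..]
  | rewrite dpC | rewrite dpX | rewrite dp_dot_z ].

Lemma p2E y tau z a b : p2 rho p H gamma y tau z a b =
  (rho y * tau ^+ 2 - dot (H y) z ^+ 2) * (a == b)%:R
  - (gamma * p y + sqn (H y)) * (cmp z a * cmp z b)
  + dot (H y) z * (cmp z a * cmp (H y) b + cmp (H y) a * cmp z b).
Proof. by rewrite /p2 !mxE !big_ord1 !mxE /cmp. Qed.

Definition Q xi jj a b y :=
  - (2%:R * dot (H y) xi * cmp (H y) jj) * (a == b)%:R
  - (gamma * p y + sqn (H y)) * ((jj == a)%:R * cmp xi b + cmp xi a * (jj == b)%:R)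
  + cmp (H y) jj * (cmp xi a * cmp (H y) b + cmp (H y) a * cmp xi b)
  + dot (H y) xi * ((jj == a)%:R * cmp (H y) b + cmp (H y) a * (jj == b)%:R).

Lemma QE tau xi jj a b y :
  dpart jj (fun z => p2 rho p H gamma y tau z a b) xi = Q xi jj a b y.
Proof.
rewrite (@dp_ext _ jj _ _ xi (fun z => p2E y tau z a b)).
dps; rewrite /Q.
ring.
Qed.

Lemma d2p2E x tau xi a b : d2p2 rho p H gamma x tau xi a b =
  \sum_jj dpart jj (Q xi jj a b) x.
Proof.
rewrite /d2p2 mxE; apply: eq_bigr => jj _; congr (dpart _ _ _).
by apply: funext => y; rewrite QE.
Qed.

Definition dhh x jj n := dpart jj (fun z => cmp (H z) n) x.
Definition Qd x xi jj a b :=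
  - (2%:R * ((dhh x jj i0 * cmp xi i0 + dhh x jj i1 * cmp xi i1 + dhh x jj i2 * cmp xi i2) * cmp (H x) jj + dot (H x) xi * dhh x jj jj)) * (a == b)%:R
  - (gamma * dpart jj p x + (2%:R * cmp (H x) i0 * dhh x jj i0 + 2%:R * cmp (H x) i1 * dhh x jj i1 + 2%:R * cmp (H x) i2 * dhh x jj i2)) * ((jj == a)%:R * cmp xi b + cmp xi a * (jj == b)%:R)
  + dhh x jj jj * (cmp xi a * cmp (H x) b + cmp (H x) a * cmp xi b)
  + cmp (H x) jj * (cmp xi a * dhh x jj b + dhh x jj a * cmp xi b)
  + (dhh x jj i0 * cmp xi i0 + dhh x jj i1 * cmp xi i1 + dhh x jj i2 * cmp xi i2) * ((jj == a)%:R * cmp (H x) b + cmp (H x) a * (jj == b)%:R)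
  + dot (H x) xi * ((jj == a)%:R * dhh x jj b + dhh x jj a * (jj == b)%:R).

Lemma QdE x xi jj a b : dpart jj (Q xi jj a b) x = Qd x xi jj a b.
Proof.
rewrite /Q.
dps.
rewrite dp_dot_H dp_sqn_H /Qd /dhh !sum3.
ring.
Qed.
End D.

Section E.
Context {R : realType}.
Notation V3 := 'rV[R]_3.
Implicit Types (u v y : V3) (f : V3 -> R).

Lemma e00 : (i0 == i0) = true. Proof. by []. Qed.
Lemma e01 : (i0 == i1) = false. Proof. by []. Qed.
Lemma e02 : (i0 == i2) = false. Proof. by []. Qed.
Lemma e10 : (i1 == i0) = false. Proof. by []. Qed.
Lemma e11 : (i1 == i1) = true. Proof. by []. Qed.
Lemma e12 : (i1 == i2) = false. Proof. by []. Qed.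
Lemma e20 : (i2 == i0) = false. Proof. by []. Qed.
Lemma e21 : (i2 == i1) = false. Proof. by []. Qed.
Lemma e22 : (i2 == i2) = true. Proof. by []. Qed.
Lemma n10 : nb1 i0 = i1. Proof. by []. Qed.
Lemma n11 : nb1 i1 = i2. Proof. by []. Qed.
Lemma n12 : nb1 i2 = i0. Proof. by []. Qed.
Lemma n20 : nb2 i0 = i2. Proof. by []. Qed.
Lemma n21 : nb2 i1 = i0. Proof. by []. Qed.
Lemma n22 : nb2 i2 = i1. Proof. by []. Qed.
Definition ordE := (e00, e01, e02, e10, e11, e12, e20, e21, e22, n10, n11, n12, n20, n21, n22).

Variables (rho p : V3 -> R) (H : V3 -> V3) (gamma : R).
Hypotheses (sp : smooth p) (sH : smoothV H).
Hypothesis heq : forall x, grad p x + cross (H x) (curl H x) = 0.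
Ltac dfa := dfauto; try solve [apply: (hdiff _ sH) | apply: (hdiff1 _ sH) | apply: (pdiff _ sp)
   | apply: (pdiff1 _ sp) | apply: df_dot_z | apply: (df_dot_H _ sH) | apply: (df_sqn_H _ sH) | auto].
Ltac dps := repeat first [ rewrite dpD; [idtac | by dfa ..] | rewrite dpB; [idtac | by dfa ..]
  | rewrite dpM; [idtac | by dfa ..] | rewrite dpN; [idtac | by dfa ..] | rewrite dpX2; [idtac | by dfa ..]
  | rewrite dpC | rewrite dpX | rewrite dp_dot_z | rewrite (dp_dot_H _ sH) | rewrite (dp_sqn_H _ sH) ].

Variables (t tau : R) (x xi : V3).

Definition Sm := tau *: coef_t rho p H gamma t x
  + \sum_jj cmp xi jj *: coef_x rho p H gamma jj t x + (2%:R)^-1 *: d2p2 rho p H gamma x tau xi.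

Definition Xs a b := \sum_jj cmp xi jj * CXe p H gamma x jj b a.
Definition Ys a b := \sum_jj Qd p H gamma x xi jj a b.

Lemma SmE a b : Sm a b = Xs a b + (2%:R)^-1 * Ys a b.
Proof.
rewrite /Sm coef_t0 scaler0 add0r.
rewrite (eq_bigr (fun jj => cmp xi jj *: \matrix_(i, k) CXe p H gamma x jj k i)); last first.
  move=> jj _; congr (_ *: _); apply/matrixP => i k.
  by rewrite (coef_xE _ _ _ _ sp sH) mxE.
rewrite (_ : d2p2 rho p H gamma x tau xi = \matrix_(a, b) \sum_jj Qd p H gamma x xi jj a b); last first.
  apply/matrixP => a' b'; rewrite d2p2E mxE; apply: eq_bigr => jj _.
  exact: (QdE _ _ _ sp sH).
rewrite !mxE summxE /Xs /Ys; congr (_ + _).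
by apply: eq_bigr => jj _; rewrite !mxE.
Qed.

Lemma dpp l : dpart l p x = - (cmp (H x) (nb1 l) * curlHv H x (nb2 l) - cmp (H x) (nb2 l) * curlHv H x (nb1 l)).
Proof.
have := congr1 (fun v => cmp v l) (heq x).
by rewrite cmpD cmp_grad crossE !L_cH /cmp mxE => /eqP; rewrite addr_eq0 => /eqP.
Qed.

Lemma fR : false%:R = 0 :> R. Proof. by []. Qed.
Lemma tR : true%:R = 1 :> R. Proof. by []. Qed.

Ltac gen_atoms :=
  move: (dpart i0 (fun z => cmp (H z) i0) x) (dpart i0 (fun z => cmp (H z) i1) x) (dpart i0 (fun z => cmp (H z) i2) x)
        (dpart i1 (fun z => cmp (H z) i0) x) (dpart i1 (fun z => cmp (H z) i1) x) (dpart i1 (fun z => cmp (H z) i2) x)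
        (dpart i2 (fun z => cmp (H z) i0) x) (dpart i2 (fun z => cmp (H z) i1) x) (dpart i2 (fun z => cmp (H z) i2) x)
        => d00 d01 d02 d10 d11 d12 d20 d21 d22;
  move: (cmp (H x) i0) (cmp (H x) i1) (cmp (H x) i2) (cmp xi i0) (cmp xi i1) (cmp xi i2)
        => h0 h1 h2 s0 s1 s2.

Lemma core a b : Ys a b + Ys b a = - (2%:R * (Xs a b + Xs b a)).
Proof.
case: (ord3P a) => [->|->|->]; case: (ord3P b) => [->|->|->];
rewrite /Ys /Xs !sum3 /Qd /CXe /ccGv /curlGv /JJv /J1v /dk /ckv !ordE !dpp /curlHv /dH /dhh !dot3 !ordE !fR !tR;
gen_atoms; ring.
Qed.

Lemma Sm_anti a b : Sm a b = - Sm b a.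
Proof.
apply/eqP; rewrite -addr_eq0 !SmE addrACA -mulrDr core mulrN mulrA mulVf ?mul1r ?subrr //.
Qed.
End E.

Section F.
Context {R : realType}.
Notation V3 := 'rV[R]_3.
Implicit Types (u v y : V3).

Lemma antisym_diag (S : 'M[R]_3) : (forall a b, S a b = - S b a) -> forall a, S a a = 0.
Proof.
move=> hS a; have := hS a a => /eqP; rewrite -subr_eq0 opprK -mulr2n -mulr_natr mulf_eq0.
by case/orP => /eqP // /eqP; rewrite pnatr_eq0.
Qed.

Lemma mulmx3E (A B : 'M[R]_3) a b : (A *m B) a b = A a i0 * B i0 b + A a i1 * B i1 b + A a i2 * B i2 b.
Proof. by rewrite mxE sum3. Qed.

Lemma mxZE (c : R) (M : 'M[R]_3) a b : (c *: M) a b = c * M a b.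
Proof. by rewrite mxE. Qed.
Lemma mxDE (M N : 'M[R]_3) a b : (M + N) a b = M a b + N a b.
Proof. by rewrite mxE. Qed.

Lemma piS_rank1 (v : V3) (c : R) (S : 'M[R]_3) : (forall a b, S a b = - S b a) ->
  (c *: outer v v) *m S *m (c *: outer v v) = 0.
Proof.
move=> hS; have hd := @antisym_diag S hS.
apply/matrixP => a b; rewrite !mulmx3E ?mxDE ?mxZE ?mxDE ?mxZE !outerE.
rewrite !hd (hS i1 i0) (hS i2 i0) (hS i2 i1).
rewrite [in RHS]mxE; ring.
Qed.

Lemma piS_2d (u v : V3) (al be de : R) (S : 'M[R]_3) : (forall a b, S a b = - S b a) ->
  al * de = be ^+ 2 ->
  let P := al *: outer u u + be *: (outer u v + outer v u) + de *: outer v v in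
  P *m S *m P = 0.
Proof.
move=> hS hdet P; have hd := @antisym_diag S hS.
apply/matrixP => a b; rewrite /P !mulmx3E ?mxDE ?mxZE ?mxDE ?mxZE !outerE.
rewrite !hd (hS i1 i0) (hS i2 i0) (hS i2 i1).
rewrite [in RHS]mxE.
set s01 := S i0 i1; set s02 := S i0 i2; set s12 := S i1 i2.
transitivity ((al * de - be ^+ 2) *
  (s01 * (cmp u i0 * cmp v i1 - cmp u i1 * cmp v i0) + s02 * (cmp u i0 * cmp v i2 - cmp u i2 * cmp v i0)
   + s12 * (cmp u i1 * cmp v i2 - cmp u i2 * cmp v i1)) * (cmp u a * cmp v b - cmp v a * cmp u b)).
  ring.
by rewrite hdet subrr !mul0r.
Qed.
End F.

Section G.
Context {R : realType}.
Notation V3 := 'rV[R]_3.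
Implicit Types (u v y : V3).

Lemma dotC u v : dot u v = dot v u.
Proof. by rewrite !dot3; ring. Qed.
Lemma lagrange u v : sqn (cross u v) = sqn u * sqn v - dot u v ^+ 2.
Proof. by rewrite /sqn !dot3 !crossE !ordE; ring. Qed.
Lemma sqn_ge0 u : 0 <= sqn u.
Proof. rewrite /sqn dot3 -!expr2; apply: addr_ge0; [apply: addr_ge0|]; exact: sqr_ge0. Qed.
Lemma sqn_neq0 u : u != 0 -> sqn u != 0.
Proof.
move=> hu; apply/negP => /eqP h0; move/negP: hu; apply; apply/eqP.
have h1 : cmp u i0 ^+ 2 + cmp u i1 ^+ 2 + cmp u i2 ^+ 2 = 0 by rewrite -h0 /sqn dot3 !expr2.
have e0 : cmp u i0 = 0 by apply/eqP; rewrite -sqrf_eq0; apply/eqP; nra.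
have e1 : cmp u i1 = 0 by apply/eqP; rewrite -sqrf_eq0; apply/eqP; nra.
have e2 : cmp u i2 = 0 by apply/eqP; rewrite -sqrf_eq0; apply/eqP; nra.
apply/rowP => i; rewrite [RHS]mxE; case: (ord3P i) => ->; [exact: e0|exact: e1|exact: e2].
Qed.

Lemma mxNE (M : 'M[R]_3) a b : (- M) a b = - M a b.
Proof. by rewrite mxE. Qed.
Definition mxEs := (@mxDE R, @mxNE, @mxZE R, @outerE R).

Lemma w2E (H : V3 -> V3) x xi a b : w2 H x xi a b =
  sqn (H x) * (cmp xi a * cmp xi b) + sqn xi * (cmp (H x) a * cmp (H x) b)
  - dot (H x) xi * (cmp (H x) a * cmp xi b + cmp xi a * cmp (H x) b).
Proof. by rewrite /w2 !mxEs. Qed.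

Variables (rho p : V3 -> R) (H : V3 -> V3) (gamma : R).
Variables (x xi : V3).
Hypotheses (hdot : dot xi (H x) != 0) (hcr : cross xi (H x) != 0).

Lemma pi1E : piproj rho p H gamma i0 x xi =
  (sqn (cross xi (H x)))^-1 *: outer (cross xi (H x)) (cross xi (H x)).
Proof.
set n := cross xi (H x).
set D := dot (H x) xi ^+ 2 - sqn (H x) * sqn xi.
have hl : sqn n = - D by rewrite /n lagrange dotC /D; ring.
have hD : D != 0 by rewrite -oppr_eq0 -hl; exact: sqn_neq0.
have E : forall a b, D * (a == b)%:R + w2 H x xi a b = - (cmp n a * cmp n b).
  move=> a b; rewrite w2E /D /n /sqn !dot3 !crossE.
  by case: (ord3P a) => ->; case: (ord3P b) => ->; rewrite !ordE ?fR ?tR; ring.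
apply/matrixP => a b; rewrite /piproj ordE mxDE !mxZE hl.
have -> : w2 H x xi a b = - (cmp n a * cmp n b) - D * (a == b)%:R by rewrite -E; ring.
rewrite [(1%:M : 'M[R]_3) a b]mxE -/D.
rewrite outerE; field; exact: hD.
Qed.

Hypotheses (hrho : 0 < rho x) (hc2 : 0 < c2 rho p gamma x).

Lemma quad c : c = cs2 rho p H gamma x xi \/ c = cf2 rho p H gamma x xi ->
  (rho x * c) ^+ 2 - (gamma * p x + sqn (H x)) * (rho x * c) * sqn xi
  + gamma * p x * dot (H x) xi ^+ 2 * sqn xi = 0.
Proof.
have hr : rho x != 0 by rewrite gt_eqF.
set r := rho x; set s := sqn xi; set hh := sqn (H x); set hx := dot (H x) xi.
set nn := sqn (cross xi (H x)).
have hnn : nn = s * hh - hx ^+ 2 by rewrite /nn lagrange dotC.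
set rad := (c2 rho p gamma x - h2 rho H x) ^+ 2 * s ^+ 2 + 4%:R * b2 rho H x xi * c2 rho p gamma x * s.
have hrad : 0 <= rad.
  apply: addr_ge0; first by apply: mulr_ge0; apply: sqr_ge0.
  apply: mulr_ge0; last exact: sqn_ge0.
  apply: mulr_ge0; last exact: ltW.
  apply: mulr_ge0 => //; rewrite /b2; apply: divr_ge0; [exact: sqn_ge0 | exact: ltW].
set D := Num.sqrt rad.
have hD : D ^+ 2 = rad by rewrite sqr_sqrtr.
have key : forall e : R, e ^+ 2 = 1 ->
  let c0 := ((c2 rho p gamma x + h2 rho H x) * s + e * D) / 2%:R in
  (r * c0) ^+ 2 - (gamma * p x + hh) * (r * c0) * s + gamma * p x * hx ^+ 2 * s = 0.
  move=> e he c0.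
  have -> : (r * c0) ^+ 2 - (gamma * p x + hh) * (r * c0) * s + gamma * p x * hx ^+ 2 * s
      = r ^+ 2 / 4%:R * (e ^+ 2 * D ^+ 2 - rad) + gamma * p x * s * (nn - hh * s + hx ^+ 2).
    rewrite /c0 /rad /c2 /h2 /b2 -/r -/s -/hh -/nn.
    field; exact: hr.
  by rewrite he mul1r hD subrr mulr0 add0r hnn; ring.
case => ->.
- have := key (-1); rewrite sqrrN expr1n => /(_ erefl).
  by rewrite /cs2 /disc -/s -/rad -/D mulN1r.
- have := key 1; rewrite expr1n => /(_ erefl).
  by rewrite /cf2 /disc -/s -/rad -/D mul1r.
Qed.

Lemma dnz c : c = cs2 rho p H gamma x xi \/ c = cf2 rho p H gamma x xi ->
  rho x * c - dot (H x) xi ^+ 2 != 0.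
Proof.
move=> hc; have q := @quad c hc; apply/negP => /eqP h.
have e : rho x * c = dot (H x) xi ^+ 2 by apply/eqP; rewrite -subr_eq0 h.
rewrite e in q.
have h2 : dot (H x) xi ^+ 2 * sqn (cross xi (H x)) = 0.
  rewrite lagrange (dotC xi (H x)) -oppr0 -q; ring.
move/eqP: h2; rewrite mulf_eq0 => /orP [].
  by rewrite sqrf_eq0 dotC; apply/negP.
by apply/negP; apply: sqn_neq0.
Qed.

Lemma pi_aux_S c c' (S : 'M[R]_3) : c = cs2 rho p H gamma x xi \/ c = cf2 rho p H gamma x xi ->
  (forall a b, S a b = - S b a) ->
  pi_aux rho p H gamma x xi c c' *m S *m pi_aux rho p H gamma x xi c c' = 0.
Proof.
move=> hc hS.
have hd := @dnz c hc; have q := @quad c hc.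
set k := (rho x * c - rho x * c')^-1.
set m := dot (H x) xi ^+ 2 / (rho x * c - dot (H x) xi ^+ 2).
set A := gamma * p x + sqn (H x).
have E : pi_aux rho p H gamma x xi c c' =
  (k * (A + m * sqn (H x))) *: outer xi xi + (- k * dot (H x) xi * (1 + m)) *: (outer xi (H x) + outer (H x) xi)
  + (k * m * sqn xi) *: outer (H x) (H x).
  apply/matrixP => a b; rewrite /pi_aux -/k -/m -/A !mxEs; ring.
rewrite E; apply: piS_2d => //.
apply/eqP; rewrite -subr_eq0; apply/eqP.
transitivity (k ^+ 2 * (- (dot (H x) xi ^+ 2 / (rho x * c - dot (H x) xi ^+ 2) ^+ 2)) *
  ((rho x * c) ^+ 2 - (gamma * p x + sqn (H x)) * (rho x * c) * sqn xi
  + gamma * p x * dot (H x) xi ^+ 2 * sqn xi)).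
  rewrite /m /A; field; exact: hd.
by rewrite q mulr0.
Qed.
End G.

Section Hf.
Context {R : realType}.
Notation V3 := 'rV[R]_3.

Lemma cplxE (M : 'M[R]_3) : cplx_mx M = map_mx (real_complex R) M.
Proof. by []. Qed.

Lemma ii : 'i%C * 'i%C = -1 :> R[i].
Proof. by apply/eqP; rewrite eq_complex /= !(mul0r, mulr0, mul1r, mulr1, sub0r, addr0, oppr0) !eqxx. Qed.
Lemma iinv : ('i%C)^-1 = - 'i%C :> R[i].
Proof.
have hi : 'i%C != 0 :> R[i].
  by apply/negP => /eqP h; have := ii; rewrite h mul0r => /eqP; rewrite eq_sym oppr_eq0 oner_eq0.
apply: (mulfI hi); rewrite mulfV // mulrN ii opprK //.
Qed.

Variables (rho p : V3 -> R) (H : V3 -> V3) (gamma : R) (t tau : R) (x xi : V3).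

Lemma psub_gen (X D : 'M[R]_3) : 'i%C *: cplx_mx X - (2%:R * 'i%C)^-1 *: cplx_mx D
   = 'i%C *: cplx_mx (X + 2%:R^-1 *: D).
Proof.
rewrite !cplxE map_mxD map_mxZ scalerDr scalerA -scaleNr.
congr (_ + _ *: _).
rewrite invfM iinv fmorphV rmorph_nat.
by rewrite mulrN opprK mulrC.
Qed.

Lemma psubE : psub rho p H gamma t x tau xi = 'i%C *: cplx_mx (Sm rho p H gamma t tau x xi).
Proof. rewrite /psub /p1 /Sm; exact: psub_gen. Qed.
End Hf.

Theorem lemma5p4 (R : realType) (rho p : 'rV[R]_3 -> R) (H : 'rV[R]_3 -> 'rV[R]_3)
  (gamma : R) :
  smooth rho -> smooth p -> smoothV H ->
  (forall x, 0 < rho x) ->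
  (forall x, grad p x + cross (H x) (curl H x) = 0) ->
  (forall x, 0 < c2 rho p gamma x) ->
  (forall x, 0 < sqn (H x)) ->
  (forall x, sqn (H x) != rho x * c2 rho p gamma x) ->
  forall (t : R) (x : 'rV[R]_3) (tau : R) (xi : 'rV[R]_3) (j : 'I_3),
    dot xi (H x) != 0 -> cross xi (H x) != 0 ->
    qq rho p H gamma j x tau xi = 0 ->
    cplx_mx (tp2 rho p H gamma j x tau xi) *m psub rho p H gamma t x tau xi
      *m cplx_mx (piproj rho p H gamma j x xi) = 0.
Proof.
move=> srho sp sH hrho heq hc2 hH hneq t x tau xi j hdot hcr hq.
have htp : tp2 rho p H gamma j x tau xi = piproj rho p H gamma j x xi.
  by rewrite /tp2 hq big1 ?addr0 // => k _; rewrite mul0r scale0r.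
rewrite htp psubE.
set S := Sm rho p H gamma t tau x xi.
have hS : forall a b, S a b = - S b a by move=> a b; exact: (@Sm_anti _ rho p H gamma sp sH heq t tau x xi a b).
have hP : piproj rho p H gamma j x xi *m S *m piproj rho p H gamma j x xi = 0.
  case: (ord3P j) => ->.
  - by rewrite pi1E //; exact: piS_rank1.
  - rewrite /piproj !ordE; apply: pi_aux_S => //; by left.
  - rewrite /piproj !ordE; apply: pi_aux_S => //; by right.
rewrite -scalemxAr -scalemxAl !cplxE -!map_mxM.
by rewrite -cplxE hP /cplx_mx map_mx0 scaler0.
Qed.
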